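(* Let $L$ spin-orbitals be indexed by $\{1,\dots,L\}$ and $1\le N_{\mathrm{occ}}<L$; an o-operator is $\hat a^\dagger_p$ or $\hat a_p$ with $p\le N_{\mathrm{occ}}$, a v-operator one with $p>N_{\mathrm{occ}}$, and an arbitrary operator is a creation or annihilation operator whose spin-orbital is not specified to be occupied or virtual (neither an o- nor a v-operator). Let $\hat C$ be a chain of $n$ excitation operators $\hat E^a_i=\hat a^\dagger_a\hat a_i$ and $n$ deexcitation operators $\hat D^i_a=\hat a^\dagger_i\hat a_a$ ($i\le N_{\mathrm{occ}}<a$), and let $S=s_1\cdots s_{2n}$ be the word obtained by replacing each deexcitation operator by ''('' and each excitation operator by '')''. Let $N\ge1$ and $K\in\{0,\dots,2n\}$, and let $\hat C^N_K$ be the chain obtained from $\hat C$ by inserting, immediately after its $K$-th (de)excitation operator (read from left to right), $N$ arbitrary creation operators followed by $N$ arbitrary annihilation operators. For any chain $\hat X$ of elementary operators (expanding each (de)excitation operator into its two factors), let $\mathcal W(\hat X)$ be the number of partitions of its elementary operators into pairs such that every pair $(x,y)$, with $x$ to the left of $y$, satisfies either: $x$ is a creation operator, $y$ is an annihilation operator, and neither is a v-operator; or: $x$ is an annihilation operator, $y$ is a creation operator, and neither is an o-operator. Then: (i) if $S$ is not a Dyck word, $\mathcal W(\hat C^N_K)=0$; (ii) if $S$ is a Dyck word, then $$\mathcal W(\hat C^N_K)=N!\,\mathcal M^N_{d_K}\,\mathcal W(\hat C),\qquad \mathcal M^N_{d_K}=\sum_{\ell=0}^{\min(N,d_K)}\binom{N}{\ell}^2\binom{d_K+N-\ell}{N},$$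 where $d_K$ is the number of ''('' minus the number of '')'' among $s_1,\dots,s_K$ (so $d_0=0$).
   Context: A Dyck word is a finite word over $\{(,)\}$ with as many opening as closing brackets, every prefix of which contains at least as many opening as closing brackets. Motivation: partitions into pairs are full contractions (Wick's theorem) relative to the Fermi vacuum (Slater determinant with spin-orbitals $1,\dots,N_{\mathrm{occ}}$ occupied), and the allowed pairs are exactly those whose contraction value, given by $\langle \hat a^\dagger_r\hat a_s\rangle=\delta_{rs}n_rn_s$ and $\langle \hat a_s\hat a^\dagger_r\rangle=\delta_{rs}(1-n_r)(1-n_s)$ with $n_p$ the occupation number ($1$ for o-, $0$ for v-operators, undetermined for arbitrary operators) and zero for contractions of two creation or two annihilation operators, is not forced to vanish; $\mathcal W$ counts these ''well'' full contractions. The inserted operators are regarded as distinct objects. *)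

(* Defs.v *)
From mathcomp Require Import all_boot.
Set Implicit Arguments. Unset Strict Implicit. Unset Printing Implicit Defensive.

Inductive opclass := OccOp | VirtOp | ArbOp.

Definition opclass_eqb (x y : opclass) : bool :=
  match x, y with
  | OccOp, OccOp | VirtOp, VirtOp | ArbOp, ArbOp => true
  | _, _ => false end.

Record elop := Elop { is_cre : bool; ocls : opclass }.

Definition orb_class (Nocc p : nat) : opclass :=
  if p <= Nocc then OccOp else VirtOp.

(* A (de)excitation operator: (is_excitation, i, a) with i occupied, a virtual.
   Excitation E^a_i = a^+_a a_i ; deexcitation D^i_a = a^+_i a_a. *)
Definition xop := (bool * nat * nat)%type.

Definition xop_valid (L Nocc : nat) (x : xop) : bool :=
  [&& 1 <= x.1.2, x.1.2 <= Nocc, Nocc < x.2 & x.2 <= L].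

Definition expand_xop (Nocc : nat) (x : xop) : seq elop :=
  let: (exc, i, a) := x in
  if exc then [:: Elop true (orb_class Nocc a); Elop false (orb_class Nocc i)]
  else [:: Elop true (orb_class Nocc i); Elop false (orb_class Nocc a)].

Definition expand_chain (Nocc : nat) (C : seq xop) : seq elop :=
  flatten (map (expand_xop Nocc) C).

(* The word S: deexcitation -> "(" (true), excitation -> ")" (false). *)
Definition word_of (C : seq xop) : seq bool := map (fun x => ~~ x.1.1) C.

Definition dyck (s : seq bool) : bool :=
  [forall k : 'I_(size s).+1,
     count negb (take k s) <= count id (take k s)]
  && (count negb s == count id s).

(* d_K = #"(" - #")" among s_1..s_K (nonnegative for a Dyck word). *)
Definition depth (s : seq bool) (K : nat) : nat :=
  count id (take K s) - count negb (take K s).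

Definition insert_chain (Nocc : nat) (C : seq xop) (N K : nat) : seq elop :=
  expand_chain Nocc (take K C)
  ++ nseq N (Elop true ArbOp) ++ nseq N (Elop false ArbOp)
  ++ expand_chain Nocc (drop K C).

Definition good_pair (x y : elop) : bool :=
  (is_cre x && ~~ is_cre y && ~~ opclass_eqb (ocls x) VirtOp
     && ~~ opclass_eqb (ocls y) VirtOp)
  || (~~ is_cre x && is_cre y && ~~ opclass_eqb (ocls x) OccOp
     && ~~ opclass_eqb (ocls y) OccOp).

(* Partitions of the positions 'I_m into pairs are encoded bijectively as
   fixed-point-free involutions of 'I_m. *)
Definition well_matching (X : seq elop) (f : {ffun 'I_(size X) -> 'I_(size X)}) : bool :=
  [forall x : 'I_(size X), (f (f x) == x) && (f x != x)]
  && [forall x : 'I_(size X), (x < f x) ==> good_pair (nth (Elop true ArbOp) X x)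
                                         (nth (Elop true ArbOp) X (f x))].

Definition W (X : seq elop) : nat :=
  #|[set f : {ffun 'I_(size X) -> 'I_(size X)} | well_matching f]|.

Definition Mcoef (N d : nat) : nat :=
  \sum_(l < (minn N d).+1) 'C(N, l) ^ 2 * 'C(d + N - l, N).

(* Main.v *)
Require Import Defs.
From mathcomp Require Import all_boot.
From mathcomp Require Import zify ssralg ring.
Set Implicit Arguments. Unset Strict Implicit. Unset Printing Implicit Defensive.


Definition oo (x : elop) : bool := is_cre x && ~~ opclass_eqb (ocls x) VirtOp.
Definition oc (x : elop) : bool := ~~ is_cre x && ~~ opclass_eqb (ocls x) VirtOp.
Definition vo (x : elop) : bool := ~~ is_cre x && ~~ opclass_eqb (ocls x) OccOp.
Definition vc (x : elop) : bool := is_cre x && ~~ opclass_eqb (ocls x) OccOp.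

Lemma good_pairE x y : good_pair x y = (oo x && oc y) || (vo x && vc y).
Proof. by case: x => [[] []]; case: y => [[] []]. Qed.

Fixpoint F (X : seq elop) (a b : nat) : nat :=
  match X with
  | [::] => ((a == 0) && (b == 0) : nat)
  | x :: X' => oc x * a * F X' a.-1 b + vc x * b * F X' a b.-1
               + oo x * F X' a.+1 b + vo x * F X' a b.+1
  end.

Section Tech.
Variable Z : seq elop.
Local Notation m := (size Z).
Definition lab (i : 'I_m) := nth (Elop true ArbOp) Z i.

Definition okY t (O V : {set 'I_m}) (f : {ffun 'I_m -> 'I_m}) (y : 'I_m) : bool :=
  [&& f (f y) == y, (f y == y) == ~~ [|| y \in O, y \in V | t <= y],
     (y \in O) ==> ((t <= f y) && oc (lab (f y))),
     (y \in V) ==> ((t <= f y) && vc (lab (f y))) &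
     ((t <= y) && (y < f y)) ==> good_pair (lab y) (lab (f y))].

Definition okC t O V f := [forall y, okY t O V f y].
Definition Count t O V := #|[set f | okC t O V f]|.

Lemma W_Count : W Z = Count 0 set0 set0.
Proof.
rewrite /W /Count; apply: eq_card => f; rewrite !inE /well_matching /okC.
apply/andP/forallP => [[/forallP H1 /forallP H2] y | H].
  have := H1 y; have := H2 y.
  rewrite /okY !inE /= good_pairE.
  by move=> -> /andP[-> /negbTE ->].
split; apply/forallP => y; have := H y; rewrite /okY !inE /= good_pairE;
  case/and3P => H1 /eqP E G; rewrite ?H1 ?E // good_pairE.
Qed.

Lemma okC_inv t O V f (y : 'I_m) : okC t O V f -> f (f y) = y.
Proof. by move/forallP/(_ y)/and5P => [/eqP]. Qed.

Lemma okC_fix t O V f (y : 'I_m) : okC t O V f -> y \notin O -> y \notin V -> y < t -> f y = y.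
Proof.
move/forallP/(_ y)/and5P => [_ /eqP E _ _ _] yO yV yt.
by apply/eqP; rewrite E (negbTE yO) (negbTE yV) /= -ltnNge.
Qed.

Lemma okC_nfix t O V f (y : 'I_m) : okC t O V f -> t <= y -> f y != y.
Proof.
by move/forallP/(_ y)/and5P => [_ /eqP E _ _ _] ty; rewrite E ty !orbT.
Qed.

Lemma okC_O t O V f (y : 'I_m) : okC t O V f -> y \in O -> (t <= f y) && oc (lab (f y)).
Proof. by move/forallP/(_ y)/and5P => [_ _ H _ _] /(implyP H). Qed.

Lemma okC_V t O V f (y : 'I_m) : okC t O V f -> y \in V -> (t <= f y) && vc (lab (f y)).
Proof. by move/forallP/(_ y)/and5P => [_ _ _ H _] /(implyP H). Qed.

Lemma okC_good t O V f (y : 'I_m) : okC t O V f -> t <= y -> y < f y -> good_pair (lab y) (lab (f y)).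
Proof. by move/forallP/(_ y)/and5P => [_ _ _ _ H] ty yf; apply: (implyP H); rewrite ty yf. Qed.

Section Step.
Variables (t : nat) (ht : t < m) (O V : {set 'I_m}).
Hypothesis HO : forall y, y \in O -> y < t.
Hypothesis HV : forall y, y \in V -> y < t.
Hypothesis HOV : forall y, y \in O -> y \notin V.
Let pt : 'I_m := Ordinal ht.

Lemma neq_pt (y : 'I_m) : (y != pt) = (val y != t).
Proof. by rewrite -val_eqE. Qed.

Lemma ltE (y : 'I_m) : y != pt -> (t < y) = (t <= y).
Proof. by move=> ypt; rewrite ltn_neqAle eq_sym -neq_pt ypt. Qed.

Lemma pt_notO : pt \notin O.
Proof. by apply/negP => /HO; rewrite /= ltnn. Qed.
Lemma pt_notV : pt \notin V.
Proof. by apply/negP => /HV; rewrite /= ltnn. Qed.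

Lemma cu_zero u : u \notin O -> u \notin V -> u <= t ->
  #|[set f | okC t O V f & f pt == u]| = 0.
Proof.
move=> uO uV ut; apply/eqP; rewrite cards_eq0; apply/eqP/setP => f.
rewrite !inE; apply/negbTE/negP => /andP[Hf /eqP fpt].
case: (ltnP u t) => [ult|tu].
  have := okC_fix Hf uO uV ult; rewrite -fpt (okC_inv _ Hf) fpt => E.
  by move: ult; rewrite -E /= ltnn.
have up : u = pt by apply/val_inj => /=; apply/eqP; rewrite eqn_leq ut tu.
by move: (@okC_nfix _ _ _ _ pt Hf (leqnn t)); rewrite fpt up eqxx.
Qed.

Lemma cu_O u : u \in O ->
  #|[set f | okC t O V f & f pt == u]| = oc (lab pt) * Count t.+1 (O :\ u) V.
Proof.
move=> uO; have ut : u < t := HO uO.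
have upt : u != pt by rewrite neq_pt neq_ltn ut.
have uV := HOV uO.
case ocx: (oc (lab pt)); last first.
  rewrite mul0n; apply/eqP; rewrite cards_eq0; apply/eqP/setP => f; rewrite !inE.
  apply/negbTE/negP => /andP[Hf /eqP fpt].
  by have := okC_O Hf uO; rewrite -fpt (okC_inv _ Hf) ocx andbF.
rewrite mul1n /Count.
set A := [set f | _ & _]; set B := [set f | okC _ _ _ f].
pose rmf (f : {ffun 'I_m -> 'I_m}) : {ffun 'I_m -> 'I_m} :=
  [ffun y => if (y == pt) || (y == u) then y else f y].
pose addf (g : {ffun 'I_m -> 'I_m}) : {ffun 'I_m -> 'I_m} :=
  [ffun y => if y == pt then u else if y == u then pt else g y].
have addB g : g \in B -> addf g \in A /\ rmf (addf g) = g.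
  rewrite inE => Hg.
  have gpt : g pt = pt.
    by apply: (okC_fix Hg); rewrite ?inE ?negb_and ?pt_notO ?pt_notV ?orbT //=.
  have gu : g u = u.
    by apply: (okC_fix Hg); rewrite ?inE ?eqxx //=; apply: ltnW.
  split; last first.
    apply/ffunP => y; rewrite !ffunE.
    case: (eqVneq y pt) => [->|ypt] //=.
    by case: (eqVneq y u) => [->|yu] //=; rewrite ?eqxx.
  rewrite inE ffunE eqxx eqxx andbT.
  apply/forallP => y; rewrite /okY.
  case: (eqVneq y pt) => [->|ypt].
    rewrite !ffunE eqxx (negbTE upt) eqxx (negbTE pt_notO) (negbTE pt_notV) /=.
    by rewrite leqnn eqxx /= ltnNge (ltnW ut).
  case: (eqVneq y u) => [->|yu].
    rewrite !ffunE eqxx (negbTE upt) eqxx uO (negbTE uV) /= ocx andbT.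
    by rewrite eqxx (eq_sym pt u) (negbTE upt) leqnn /= leqNgt ut.
  have gypt : g y != pt.
    by apply: contraNneq ypt => E; rewrite -(okC_inv y Hg) E gpt.
  have gyu : g y != u.
    by apply: contraNneq yu => E; rewrite -(okC_inv y Hg) E gu.
  rewrite !ffunE (negbTE ypt) (negbTE yu) (negbTE gypt) (negbTE gyu) (okC_inv _ Hg) eqxx /=.
  have yt : (t < y) = (t <= y) by rewrite ltn_neqAle eq_sym -neq_pt ypt.
  move: Hg => /forallP/(_ y); rewrite /okY !inE yu /= yt.
  case/and5P => _ E2 E3 E4 E5; apply/and4P; split => //.
    by apply/implyP => /(implyP E3) /andP[/ltnW -> ->].
  by apply/implyP => /(implyP E4) /andP[/ltnW -> ->].
have rmA f : f \in A -> rmf f \in B /\ addf (rmf f) = f.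
  rewrite inE => /andP[Hf /eqP fpt].
  have fu : f u = pt by rewrite -fpt (okC_inv _ Hf).
  split; last first.
    apply/ffunP => y; rewrite !ffunE.
    case: (eqVneq y pt) => [->|ypt] //=.
    by case: (eqVneq y u) => [->|yu] //=; rewrite ?eqxx.
  rewrite inE; apply/forallP => y; rewrite /okY.
  case: (eqVneq y pt) => [->|ypt].
    rewrite !ffunE eqxx /= eqxx.
    by rewrite /= !inE eqxx (negbTE pt_notO) (negbTE pt_notV) ltnn !andbF.
  case: (eqVneq y u) => [->|yu].
    rewrite !ffunE eqxx orbT eqxx orbT /= !inE eqxx (negbTE uV) /=.
    by rewrite ltnNge (ltnW ut).
  have fypt : f y != pt.
    by apply: contraNneq yu => E; rewrite -(okC_inv y Hf) E fpt.
  have fyu : f y != u.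
    by apply: contraNneq ypt => E; rewrite -(okC_inv y Hf) E fu.
  rewrite !ffunE (negbTE ypt) (negbTE yu) (negbTE fypt) (negbTE fyu) /= (okC_inv _ Hf) eqxx /=.
  move: Hf => /forallP/(_ y); rewrite /okY !inE yu /= (ltE ypt) (ltE fypt).
  by case/and5P => _ -> -> -> ->.
apply/eqP; rewrite eqn_leq; apply/andP; split.
  apply: (leq_trans _ (leq_imset_card addf B)); apply: subset_leq_card.
  by apply/subsetP => f fA; have [rB <-] := rmA f fA; apply: imset_f.
apply: (leq_trans _ (leq_imset_card rmf A)); apply: subset_leq_card.
by apply/subsetP => g gB; have [aA <-] := addB g gB; apply: imset_f.
Qed.


Lemma cu_V u : u \in V ->
  #|[set f | okC t O V f & f pt == u]| = vc (lab pt) * Count t.+1 O (V :\ u).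
Proof.
move=> uV; have ut : u < t := HV uV.
have upt : u != pt by rewrite neq_pt neq_ltn ut.
have uO : u \notin O by apply/negP => /HOV; rewrite uV.
case ocx: (vc (lab pt)); last first.
  rewrite mul0n; apply/eqP; rewrite cards_eq0; apply/eqP/setP => f; rewrite !inE.
  apply/negbTE/negP => /andP[Hf /eqP fpt].
  by have := okC_V Hf uV; rewrite -fpt (okC_inv _ Hf) ocx andbF.
rewrite mul1n /Count.
set A := [set f | _ & _]; set B := [set f | okC _ _ _ f].
pose rmf (f : {ffun 'I_m -> 'I_m}) : {ffun 'I_m -> 'I_m} :=
  [ffun y => if (y == pt) || (y == u) then y else f y].
pose addf (g : {ffun 'I_m -> 'I_m}) : {ffun 'I_m -> 'I_m} :=
  [ffun y => if y == pt then u else if y == u then pt else g y].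
have addB g : g \in B -> addf g \in A /\ rmf (addf g) = g.
  rewrite inE => Hg.
  have gpt : g pt = pt.
    by apply: (okC_fix Hg); rewrite ?inE ?negb_and ?pt_notO ?pt_notV ?orbT //=.
  have gu : g u = u.
    by apply: (okC_fix Hg); rewrite ?inE ?eqxx //=; apply: ltnW.
  split; last first.
    apply/ffunP => y; rewrite !ffunE.
    case: (eqVneq y pt) => [->|ypt] //=.
    by case: (eqVneq y u) => [->|yu] //=; rewrite ?eqxx.
  rewrite inE ffunE eqxx eqxx andbT.
  apply/forallP => y; rewrite /okY.
  case: (eqVneq y pt) => [->|ypt].
    rewrite !ffunE eqxx (negbTE upt) eqxx (negbTE pt_notO) (negbTE pt_notV) /=.
    by rewrite leqnn eqxx /= ltnNge (ltnW ut).
  case: (eqVneq y u) => [->|yu].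
    rewrite !ffunE eqxx (negbTE upt) eqxx uV (negbTE uO) /= ocx andbT.
    by rewrite eqxx (eq_sym pt u) (negbTE upt) leqnn /= leqNgt ut.
  have gypt : g y != pt.
    by apply: contraNneq ypt => E; rewrite -(okC_inv y Hg) E gpt.
  have gyu : g y != u.
    by apply: contraNneq yu => E; rewrite -(okC_inv y Hg) E gu.
  rewrite !ffunE (negbTE ypt) (negbTE yu) (negbTE gypt) (negbTE gyu) (okC_inv _ Hg) eqxx /=.
  have yt : (t < y) = (t <= y) by rewrite ltn_neqAle eq_sym -neq_pt ypt.
  move: Hg => /forallP/(_ y); rewrite /okY !inE yu /= yt.
  case/and5P => _ E2 E3 E4 E5; apply/and4P; split => //.
    by apply/implyP => /(implyP E3) /andP[/ltnW -> ->].
  by apply/implyP => /(implyP E4) /andP[/ltnW -> ->].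
have rmA f : f \in A -> rmf f \in B /\ addf (rmf f) = f.
  rewrite inE => /andP[Hf /eqP fpt].
  have fu : f u = pt by rewrite -fpt (okC_inv _ Hf).
  split; last first.
    apply/ffunP => y; rewrite !ffunE.
    case: (eqVneq y pt) => [->|ypt] //=.
    by case: (eqVneq y u) => [->|yu] //=; rewrite ?eqxx.
  rewrite inE; apply/forallP => y; rewrite /okY.
  case: (eqVneq y pt) => [->|ypt].
    rewrite !ffunE eqxx /= eqxx.
    by rewrite /= !inE eqxx (negbTE pt_notO) (negbTE pt_notV) ltnn !andbF.
  case: (eqVneq y u) => [->|yu].
    rewrite !ffunE eqxx orbT eqxx orbT /= !inE eqxx (negbTE uO) /=.
    by rewrite ltnNge (ltnW ut).
  have fypt : f y != pt.
    by apply: contraNneq yu => E; rewrite -(okC_inv y Hf) E fpt.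
  have fyu : f y != u.
    by apply: contraNneq ypt => E; rewrite -(okC_inv y Hf) E fu.
  rewrite !ffunE (negbTE ypt) (negbTE yu) (negbTE fypt) (negbTE fyu) /= (okC_inv _ Hf) eqxx /=.
  move: Hf => /forallP/(_ y); rewrite /okY !inE yu /= (ltE ypt) (ltE fypt).
  by case/and5P => _ -> -> -> ->.
apply/eqP; rewrite eqn_leq; apply/andP; split.
  apply: (leq_trans _ (leq_imset_card addf B)); apply: subset_leq_card.
  by apply/subsetP => f fA; have [rB <-] := rmA f fA; apply: imset_f.
apply: (leq_trans _ (leq_imset_card rmf A)); apply: subset_leq_card.
by apply/subsetP => g gB; have [aA <-] := addB g gB; apply: imset_f.
Qed.


Lemma gt_O : oo (lab pt) ->
  [set f | okC t O V f & t < f pt] = [set f | okC t.+1 (pt |: O) V f].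
Proof.
move=> oox; have vox : vo (lab pt) = false.
  by move: oox; rewrite /oo /vo; case: (is_cre _).
apply/setP => f; rewrite !inE; apply/andP/idP => [[Hf tf]|Hf].
  apply/forallP => y; rewrite /okY.
  have fpt : f pt != pt by rewrite neq_pt neq_ltn tf orbT.
  case: (eqVneq y pt) => [->|ypt].
    rewrite (okC_inv _ Hf) eqxx (negbTE fpt) !inE eqxx /= (negbTE pt_notV) tf /=.
    have := @okC_good _ _ _ _ pt Hf (leqnn t) tf; rewrite good_pairE oox vox /= orbF => ->.
    by rewrite ltnn.
  move: (Hf) => /forallP/(_ y); rewrite /okY !inE (negbTE ypt) /= (ltE ypt).
  case/and5P => -> -> E3 E4 ->; rewrite andbT /=.
  have fypt : (y \in O) || (y \in V) -> f y != pt.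
    move=> yOV; apply/eqP => E.
    have : f pt = y by rewrite -E (okC_inv _ Hf).
    move=> E'; move: tf; rewrite E'.
    by case/orP: yOV => [/HO|/HV] yt; rewrite ltnNge (ltnW yt).
  apply/andP; split; apply/implyP => yX.
    by move: (implyP E3 yX); rewrite (ltE (fypt _)) ?yX.
  by move: (implyP E4 yX); rewrite (ltE (fypt _)) ?yX ?orbT.
have tf : t < f pt.
  by have := okC_O Hf (setU11 pt O); case/andP.
split => //; apply/forallP => y; rewrite /okY.
have fpt : f pt != pt by rewrite neq_pt neq_ltn tf orbT.
case: (eqVneq y pt) => [->|ypt].
  rewrite (okC_inv _ Hf) eqxx (negbTE fpt) (negbTE pt_notV) (negbTE pt_notO) leqnn tf /=.
  have := okC_O Hf (setU11 pt O); case/andP => _ ocf.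
  by rewrite good_pairE oox ocf.
move: (Hf) => /forallP/(_ y); rewrite /okY !inE (negbTE ypt) /= (ltE ypt).
case/and5P => -> -> E3 E4 ->; rewrite andbT /=.
apply/andP; split; apply/implyP => yX.
  by case/andP: (implyP E3 yX) => /ltnW -> ->.
by case/andP: (implyP E4 yX) => /ltnW -> ->.
Qed.

Lemma gt_V : vo (lab pt) ->
  [set f | okC t O V f & t < f pt] = [set f | okC t.+1 O (pt |: V) f].
Proof.
move=> vox; have oox : oo (lab pt) = false.
  by move: vox; rewrite /oo /vo; case: (is_cre _).
apply/setP => f; rewrite !inE; apply/andP/idP => [[Hf tf]|Hf].
  apply/forallP => y; rewrite /okY.
  have fpt : f pt != pt by rewrite neq_pt neq_ltn tf orbT.
  case: (eqVneq y pt) => [->|ypt].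
    rewrite (okC_inv _ Hf) eqxx (negbTE fpt) !inE eqxx /= (negbTE pt_notO) tf /=.
    have := @okC_good _ _ _ _ pt Hf (leqnn t) tf; rewrite good_pairE oox vox /= => ->.
    by rewrite ltnn.
  move: (Hf) => /forallP/(_ y); rewrite /okY !inE (negbTE ypt) /= (ltE ypt).
  case/and5P => -> -> E3 E4 ->; rewrite andbT /=.
  have fypt : (y \in O) || (y \in V) -> f y != pt.
    move=> yOV; apply/eqP => E.
    have : f pt = y by rewrite -E (okC_inv _ Hf).
    move=> E'; move: tf; rewrite E'.
    by case/orP: yOV => [/HO|/HV] yt; rewrite ltnNge (ltnW yt).
  apply/andP; split; apply/implyP => yX.
    by move: (implyP E3 yX); rewrite (ltE (fypt _)) ?yX.
  by move: (implyP E4 yX); rewrite (ltE (fypt _)) ?yX ?orbT.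
have tf : t < f pt.
  by have := okC_V Hf (setU11 pt V); case/andP.
split => //; apply/forallP => y; rewrite /okY.
have fpt : f pt != pt by rewrite neq_pt neq_ltn tf orbT.
case: (eqVneq y pt) => [->|ypt].
  rewrite (okC_inv _ Hf) eqxx (negbTE fpt) (negbTE pt_notV) (negbTE pt_notO) leqnn tf /=.
  have := okC_V Hf (setU11 pt V); case/andP => _ ocf.
  by rewrite good_pairE oox vox ocf.
move: (Hf) => /forallP/(_ y); rewrite /okY !inE (negbTE ypt) /= (ltE ypt).
case/and5P => -> -> E3 E4 ->; rewrite andbT /=.
apply/andP; split; apply/implyP => yX.
  by case/andP: (implyP E3 yX) => /ltnW -> ->.
by case/andP: (implyP E4 yX) => /ltnW -> ->.
Qed.

Lemma gt_card :
  #|[set f | okC t O V f & t < f pt]| =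
  oo (lab pt) * Count t.+1 (pt |: O) V + vo (lab pt) * Count t.+1 O (pt |: V).
Proof.
case oox: (oo (lab pt)).
  have vox : vo (lab pt) = false by move: oox; rewrite /oo /vo; case: (is_cre _).
  by rewrite vox gt_O // mul1n mul0n addn0.
case vox: (vo (lab pt)).
  by rewrite gt_V // mul1n mul0n.
rewrite !mul0n; apply/eqP; rewrite cards_eq0; apply/eqP/setP => f; rewrite !inE.
apply/negbTE/negP => /andP[Hf tf].
by have := @okC_good _ _ _ _ pt Hf (leqnn t) tf; rewrite good_pairE oox vox.
Qed.

Lemma part (P : pred 'I_m) :
  #|[set f | okC t O V f & P (f pt)]| = \sum_(u | P u) #|[set f | okC t O V f & f pt == u]|.
Proof.
rewrite -sum1_card (partition_big (fun f : {ffun 'I_m -> 'I_m} => f pt) P) => [|f]; last first.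
  by rewrite inE => /andP[].
apply: eq_bigr => u Pu; rewrite -sum1_card; apply: eq_bigl => f; rewrite !inE.
by case: eqP => [->|]; rewrite ?Pu ?andbT ?andbF.
Qed.

Lemma step : Count t O V =
  \sum_(u in O) oc (lab pt) * Count t.+1 (O :\ u) V
  + \sum_(u in V) vc (lab pt) * Count t.+1 O (V :\ u)
  + (oo (lab pt) * Count t.+1 (pt |: O) V + vo (lab pt) * Count t.+1 O (pt |: V)).
Proof.
have -> : Count t O V = #|[set f | okC t O V f & predT (f pt)]|.
  by apply: eq_card => f; rewrite !inE andbT.
rewrite part (bigID (mem O)) /=.
rewrite [X in _ + X](bigID (mem V)) /=.
rewrite [X in _ + (_ + X)](bigID (fun u : 'I_m => t < u)) /=.
rewrite [X in _ + (_ + (_ + X))]big1 ?addn0; last first.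
  by move=> u /andP[/andP[uO uV] tu]; apply: cu_zero => //; rewrite leqNgt.
rewrite -gt_card (part (fun u : 'I_m => t < u)) addnA; congr (_ + _ + _).
- by apply: eq_big => [u|u uO]; [rewrite /= | apply: cu_O].
- apply: eq_big => [u|u /andP[_ uV]]; last by apply: cu_V.
  by rewrite /=; case uV: (u \in V); rewrite ?andbT ?andbF //; apply/negP => /HOV; rewrite uV.
- apply: eq_bigl => u /=; case tu: (t < u); rewrite ?andbT ?andbF //.
  apply/andP; split; apply/negP; [move/HO | move/HV] => ut;
    by move: tu; rewrite ltnNge (ltnW ut).
Qed.

End Step.
Lemma Count_F k : forall t, t + k = m -> forall O V : {set 'I_m},
  (forall y : 'I_m, y \in O -> y < t) -> (forall y : 'I_m, y \in V -> y < t) ->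
  (forall y, y \in O -> y \notin V) ->
  Count t O V = F (drop t Z) #|O| #|V|.
Proof.
elim: k => [|k IH] t htk O V HO HV HOV.
  rewrite addn0 in htk; subst t; rewrite drop_size /=.
  case: (set_0Vmem O) => [-> | [y yO]]; last first.
    have -> : #|O| == 0 = false by apply/negbTE; rewrite cards_eq0; apply/set0Pn; exists y.
    apply/eqP; rewrite cards_eq0; apply/eqP/setP => f; rewrite !inE.
    by apply/negbTE/negP => Hf; have := okC_O Hf yO; rewrite leqNgt ltn_ord.
  case: (set_0Vmem V) => [-> | [y yV]]; last first.
    have -> : #|V| == 0 = false by apply/negbTE; rewrite cards_eq0; apply/set0Pn; exists y.
    rewrite andbF; apply/eqP; rewrite cards_eq0; apply/eqP/setP => f; rewrite !inE.
    by apply/negbTE/negP => Hf; have := okC_V Hf yV; rewrite leqNgt ltn_ord.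
  rewrite cards0 /= /Count.
  have -> : [set f | okC m set0 set0 f] = [set [ffun y => y]].
    apply/setP => f; rewrite !inE; apply/idP/eqP => [Hf|->].
      by apply/ffunP => y; rewrite ffunE; apply: (okC_fix Hf); rewrite ?inE.
    apply/forallP => y; rewrite /okY !ffunE !inE !eqxx /= leqNgt ltn_ord /=.
    by [].
  by rewrite cards1.
have ht : t < m by rewrite -htk addnS ltnS leq_addr.
rewrite (step ht HO HV HOV) (drop_nth (Elop true ArbOp) ht) /=.
have htk' : t.+1 + k = m by rewrite addSnnS.
have IH' := IH t.+1 htk'.
rewrite (eq_bigr (fun _ => oc (lab (Ordinal ht)) * F (drop t.+1 Z) #|O|.-1 #|V|)); last first.
  move=> u uO; rewrite IH'.
  - by rewrite (cardsD1 u O) uO.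
  - by move=> y; rewrite inE => /andP[_ /HO /ltnW].
  - by move=> y /HV /ltnW.
  - by move=> y; rewrite inE => /andP[_ /HOV].
rewrite [\sum_(u in V) _](eq_bigr (fun _ => vc (lab (Ordinal ht)) * F (drop t.+1 Z) #|O| #|V|.-1)); last first.
  move=> u uV; rewrite IH'.
  - by rewrite (cardsD1 u V) uV.
  - by move=> y /HO /ltnW.
  - by move=> y; rewrite inE => /andP[_ /HV /ltnW].
  - by move=> y yO; rewrite inE negb_and (HOV _ yO) orbT.
rewrite !sum_nat_const.
have ptO : Ordinal ht \notin O by apply/negP => /HO; rewrite /= ltnn.
have ptV : Ordinal ht \notin V by apply/negP => /HV; rewrite /= ltnn.
rewrite IH'; first last.
- by move=> y; rewrite !inE => /orP[/eqP ->|/HOV] //.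
- by move=> y /HV /ltnW.
- by move=> y; rewrite !inE => /orP[/eqP -> //|/HO /ltnW].
rewrite IH'; first last.
- by move=> y yO; rewrite !inE negb_or (HOV _ yO) andbT; apply: contraNneq ptO => <-.
- by move=> y; rewrite !inE => /orP[/eqP -> //|/HV /ltnW].
- by move=> y /HO /ltnW.
rewrite !cardsU1 ptO ptV /lab /=.
set x := nth _ Z t.
by rewrite !add1n !mulnA (mulnC #|O|) (mulnC #|V|) !addnA.
Qed.

Theorem W_F : W Z = F Z 0 0.
Proof. by rewrite W_Count (@Count_F m 0) ?cards0 ?drop0 // => y; rewrite inE. Qed.

End Tech.


Lemma F_creA X a b : F (Elop true ArbOp :: X) a b = b * F X a b.-1 + F X a.+1 b.
Proof. by rewrite /= !mul0n !mul1n add0n addn0. Qed.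
Lemma F_annA X a b : F (Elop false ArbOp :: X) a b = a * F X a.-1 b + F X a b.+1.
Proof. by rewrite /= !mul0n !mul1n !addn0. Qed.

Lemma annA_seq R k : forall a b, F (nseq k (Elop false ArbOp) ++ R) a b =
  \sum_(j < k.+1) 'C(k, j) * a ^_ j * F R (a - j) (b + k - j).
Proof.
elim: k => [|k IH] a b.
  by rewrite big_ord_recl big_ord0 /= !subn0 addn0 ffactn0 !mul1n addn0.
change (nseq k.+1 _ ++ R) with (Elop false ArbOp :: (nseq k (Elop false ArbOp) ++ R)).
rewrite F_annA !IH [RHS]big_ord_recl bin0 ffactn0 !mul1n.
under [X in _ = _ + X]eq_bigr => i _ do rewrite lift0 binS !mulnDl.
rewrite big_split /= addnA [RHS]addnC big_distrr /=; congr (_ + _).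
  apply: eq_bigr => i _; rewrite ffactnS.
  have -> : a - i.+1 = a.-1 - i by lia.
  have -> : b + k.+1 - i.+1 = b + k - i by lia.
  by rewrite !mulnA (mulnC a) -!mulnA.
rewrite big_ord_recl bin0 ffactn0 !mul1n !subn0.
rewrite [X in _ = _ + X]big_ord_recr /= bin_small // !mul0n addn0.
have -> : b + k.+1 = b.+1 + k by lia.
congr (_ + _); apply: eq_bigr => i _; rewrite lift0.
Qed.

Lemma creA_seq R k : forall a b, F (nseq k (Elop true ArbOp) ++ R) a b =
  \sum_(j < k.+1) 'C(k, j) * b ^_ j * F R (a + k - j) (b - j).
Proof.
elim: k => [|k IH] a b.
  by rewrite big_ord_recl big_ord0 /= !subn0 addn0 ffactn0 !mul1n addn0.
change (nseq k.+1 _ ++ R) with (Elop true ArbOp :: (nseq k (Elop true ArbOp) ++ R)).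
rewrite F_creA !IH [RHS]big_ord_recl bin0 ffactn0 !mul1n.
under [X in _ = _ + X]eq_bigr => i _ do rewrite lift0 binS !mulnDl.
rewrite big_split /= addnA [RHS]addnC big_distrr /=; congr (_ + _).
  apply: eq_bigr => i _; rewrite ffactnS.
  have -> : b - i.+1 = b.-1 - i by lia.
  have -> : a + k.+1 - i.+1 = a + k - i by lia.
  by rewrite !mulnA (mulnC b) -!mulnA.
rewrite big_ord_recl bin0 ffactn0 !mul1n !subn0.
rewrite [X in _ = _ + X]big_ord_recr /= bin_small // !mul0n addn0.
have -> : a + k.+1 = a.+1 + k by lia.
congr (_ + _); apply: eq_bigr => i _; rewrite lift0.
Qed.


Fixpoint mw (s : seq bool) (d : nat) : nat :=
  if s is b :: s' then (if b then mw s' d.+1 else d * d * mw s' d.-1) else 1.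
Fixpoint ed (s : seq bool) (d : nat) : nat :=
  if s is b :: s' then (if b then ed s' d.+1 else ed s' d.-1) else d.

Section Exp.
Variables L Nocc : nat.

Lemma expand_cons x C : expand_chain Nocc (x :: C) = expand_xop Nocc x ++ expand_chain Nocc C.
Proof. by []. Qed.

Lemma expand_cat C1 C2 : expand_chain Nocc (C1 ++ C2) = expand_chain Nocc C1 ++ expand_chain Nocc C2.
Proof. by rewrite /expand_chain map_cat flatten_cat. Qed.

Lemma F_expand C R d : all (xop_valid L Nocc) C ->
  F (expand_chain Nocc C ++ R) d d = mw (word_of C) d * F R (ed (word_of C) d) (ed (word_of C) d).
Proof.
elim: C d => [|[[e i] a] C IH] d /=; first by rewrite mul1n.
case/andP => /and4P [_ /= iN /= Na _] vC.
rewrite expand_cons /expand_xop /orb_class iN leqNgt Na -catA.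
case: e => /=; rewrite !mul0n !mul1n ?add0n ?addn0 ?IH // ?mulnA //.
Qed.

Lemma F_expand_neq C a b : all (xop_valid L Nocc) C -> a != b ->
  F (expand_chain Nocc C) a b = 0.
Proof.
elim: C a b => [|[[e i] a'] C IH] a b /=.
  by move=> _; case: a => [|a]; case: b => [|b] //.
case/andP => /and4P [_ /= iN /= Na _] vC ab.
rewrite expand_cons /expand_xop /orb_class iN leqNgt Na.
case: e => /=; rewrite !mul0n !mul1n ?add0n ?addn0.
  case: a ab => [|a]; case: b => [|b] //= ab; rewrite ?muln0 ?mul0n //.
  by rewrite IH ?muln0.
by rewrite IH.
Qed.
End Exp.

Lemma mw_inv s d : mw s d != 0 -> ed s d + count negb s = d + count id s.
Proof.
elim: s d => [|[] s IH] d //=.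
  by move=> /IH; rewrite /=; lia.
case: d => [|d] //=; rewrite !muln_eq0 negb_or => /andP[_ /IH]; rewrite /=; lia.
Qed.

Lemma mw_prefix s d : mw s d != 0 -> forall k, count negb (take k s) <= d + count id (take k s).
Proof.
elim: s d => [|[] s IH] d //= H [|k] //=.
  by have := IH _ H k; rewrite /= add0n; lia.
case: d H => [|d] //=; rewrite !muln_eq0 negb_or => /andP[_ /IH Hk].
by have := Hk k; rewrite /= add0n; lia.
Qed.

Lemma fw_dyck s : mw s 0 * (ed s 0 == 0) != 0 -> dyck s.
Proof.
case E: (ed s 0 == 0); rewrite ?muln0 // muln1 => H; move/eqP: E => E.
apply/andP; split.
  by apply/forallP => k; have := mw_prefix H k; rewrite add0n.
by have := mw_inv H; rewrite E add0n => ->.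
Qed.


Lemma ffact_split n a b : n ^_ (a + b) = n ^_ a * (n - a) ^_ b.
Proof.
elim: a n => [|a IH] n; first by rewrite add0n ffactn0 mul1n subn0.
rewrite addSn !ffactnS IH mulnA; congr (_ * _ ^_ _); lia.
Qed.

Lemma term_id N e l : l <= N -> e ^_ l * (e + N - l) ^_ (N - l) = N`! * 'C(e + N - l, N).
Proof.
move=> lN; case: (leqP l e) => le; last first.
  by rewrite ffact_small // bin_small ?mul0n ?muln0 //; lia.
rewrite mulnC; transitivity ((e + N - l) ^_ (N - l + l)).
  by rewrite ffact_split; congr (_ * _ ^_ _); lia.
by rewrite (subnK lN) -bin_ffact mulnC.
Qed.

Lemma inner_sum N e l c : l <= N ->
  e ^_ l * \sum_(j < N.+1) 'C(N, j) * (e + N - l) ^_ j *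
      ((e + N - l - j == e) * (e - l + N - j == e) * c)
  = e ^_ l * ('C(N, N - l) * (e + N - l) ^_ (N - l) * c).
Proof.
move=> lN; case: (leqP l e) => le; last by rewrite ffact_small // !mul0n.
congr (_ * _).
have hj0 : N - l < N.+1 by rewrite ltnS leq_subr.
rewrite (bigD1 (Ordinal hj0)) //= big1 ?addn0.
  have -> : e + N - l - (N - l) = e by lia.
  have -> : e - l + N - (N - l) = e by lia.
  by rewrite eqxx !mul1n.
move=> j; rewrite -val_eqE /= => jN.
case: (leqP j (e + N - l)) => hj; last by rewrite ffact_small // muln0 mul0n.
have -> : (e + N - l - j == e) = false by apply/eqP; move/eqP: jN; lia.
by rewrite !mul0n muln0.
Qed.

Lemma block_sum N e m (G : nat -> nat -> nat) :
  (forall x y, m * G x y = (x == e) * (y == e) * (m * G e e)) ->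
  m * (\sum_(l < N.+1) 'C(N, l) * e ^_ l *
        \sum_(j < N.+1) 'C(N, j) * (e + N - l) ^_ j * G (e + N - l - j) (e - l + N - j))
  = N`! * Mcoef N e * (m * G e e).
Proof.
move=> HG; set c := m * G e e.
rewrite big_distrr /=.
transitivity (\sum_(l < N.+1) N`! * ('C(N, l) ^ 2 * 'C(e + N - l, N)) * c).
  apply: eq_bigr => l _.
  have lN : l <= N by rewrite -ltnS.
  rewrite mulnCA big_distrr /=.
  under eq_bigr => j _ do rewrite mulnCA HG.
  rewrite -mulnA inner_sum // bin_sub // -/c.
  have T := term_id e lN; rewrite expnS expn1.
  transitivity (e ^_ l * (e + N - l) ^_ (N - l) * ('C(N, l) * 'C(N, l) * c)); first ring.
  rewrite T; ring.
rewrite -big_distrl -big_distrr /= /Mcoef; congr (_ * _ * _).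
have hM : (minn N e).+1 <= N.+1 by rewrite ltnS geq_minl.
rewrite (big_ord_widen _ (fun l => 'C(N, l) ^ 2 * 'C(e + N - l, N)) hM).
rewrite [LHS](bigID (fun l : 'I_N.+1 => l < (minn N e).+1)) /=.
rewrite [X in _ + X = _]big1 ?addn0 //.
move=> l; rewrite -leqNgt => hl.
have lN : l <= N by rewrite -ltnS.
by rewrite (@bin_small (e + N - l) N) ?muln0 //; lia.
Qed.


Lemma F_nil x : F [::] x x = (x == 0).
Proof. by rewrite /= andbb. Qed.

Lemma general (L Nocc : nat) (C : seq xop) (n N K : nat) :
  all (xop_valid L Nocc) C ->
  size C = (2 * n)%N ->
  count (fun x : xop => x.1.1) C = n ->
  W (insert_chain Nocc C N K)
  = (N`! * Mcoef N (depth (word_of C) K) * W (expand_chain Nocc C))%N.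
Proof.
move=> vC sC cC.
have /andP[v1 v2] : all (xop_valid L Nocc) (take K C) && all (xop_valid L Nocc) (drop K C).
  by rewrite -all_cat cat_take_drop.
set S1 := word_of (take K C); set S2 := word_of (drop K C).
set R2 := expand_chain Nocc (drop K C).
set e := ed S1 0; set m := mw S1 0.
have WC : W (expand_chain Nocc C) = m * F R2 e e.
  by rewrite W_F -{1}(cat_take_drop K C) expand_cat (@F_expand L) //.
have tot : count id S1 + count id S2 = count negb S1 + count negb S2.
  rewrite -!count_cat /S1 /S2 -map_cat cat_take_drop /word_of !count_map.
  have h1 : count (preim (fun x : xop => ~~ x.1.1) id) C = size C - n.
    by rewrite -cC -(count_predC (fun x : xop => x.1.1)) addKn.
  have h2 : count (preim (fun x : xop => ~~ x.1.1) negb) C = n.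
    by rewrite -cC; apply: eq_count => x /=; rewrite negbK.
  rewrite h1 h2; lia.
have HG : forall x y, m * F R2 x y = (x == e) * (y == e) * (m * F R2 e e).
  move=> x y; case: (eqVneq x y) => [<-|xy]; last first.
    rewrite /R2 (@F_expand_neq L) // muln0.
    case: (eqVneq x e) => [xe|]; last by rewrite !mul0n.
    case: (eqVneq y e) => [ye|]; last by rewrite muln0 mul0n.
    by move: xy; rewrite xe ye eqxx.
  case: (eqVneq x e) => [->|xe]; first by rewrite /= !mul1n.
  rewrite !mul0n /R2 -[expand_chain _ _]cats0 (@F_expand L) // F_nil.
  apply/eqP; rewrite !muln_eq0; apply/negPn/negP; rewrite !negb_or.
  case/and3P => Hm Hw He; move: He; rewrite eqb0 negbK => /eqP He.
  have i1 := mw_inv Hm; have i2 := mw_inv Hw.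
  move: i1 i2; rewrite -/e He; move/eqP: xe; rewrite -/S2; lia.
have Wins : W (insert_chain Nocc C N K) =
  m * (\sum_(l < N.+1) 'C(N, l) * e ^_ l *
        \sum_(j < N.+1) 'C(N, j) * (e + N - l) ^_ j * F R2 (e + N - l - j) (e - l + N - j)).
  rewrite W_F /insert_chain (@F_expand L) // creA_seq; congr (_ * _).
  by apply: eq_bigr => l _; rewrite annA_seq.
rewrite Wins block_sum // WC.
have [m0|mn0] := eqVneq m 0; first by rewrite m0 !mul0n !muln0.
congr (_ * Mcoef N _ * _).
rewrite /depth -map_take -/S1 /e.
have h := mw_inv mn0; rewrite add0n in h.
change (ed S1 0 = count id S1 - count negb S1); by rewrite -h addnK.
Qed.

Theorem mainTheorem5 (L Nocc : nat) (C : seq xop) (n N K : nat) :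
  1 <= Nocc -> Nocc < L ->
  all (xop_valid L Nocc) C ->
  size C = (2 * n)%N ->
  count (fun x : xop => x.1.1) C = n ->
  1 <= N -> K <= size C ->
  (~~ dyck (word_of C) -> W (insert_chain Nocc C N K) = 0%N) /\
  (dyck (word_of C) ->
     W (insert_chain Nocc C N K)
     = (N`! * Mcoef N (depth (word_of C) K) * W (expand_chain Nocc C))%N).
Proof.
move=> _ _ vC sC cC _ _.
have G := general N K vC sC cC.
split=> // nd; rewrite G.
have -> : W (expand_chain Nocc C) = 0; last by rewrite muln0.
rewrite W_F -[expand_chain _ _]cats0 (@F_expand L) // F_nil.
by apply/eqP; apply: contraNT nd => /fw_dyck.
Qed.
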